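(* Let $N=((V\cup \{s\},A),\tau)$ be a temporal network with $n=|V|+1\ge 1$ vertices such that $\lambda_{N}(s,v)\ge n$ for all $v\in V$. Then $N$ contains two arc-disjoint spanning $\tau$-respecting $s$-arborescences.
   Context: A temporal network is a pair $N=(D,\tau)$ where $D=(V\cup\{s\},A)$ is a directed graph (parallel arcs allowed, cycles allowed) with root $s$ entered by no arc, and $\tau:A\to\mathbb{N}$. A directed path with arcs $a_1,\dots,a_\ell$ in order is $\tau$-respecting if $\tau(a_1)\le\dots\le\tau(a_\ell)$; $\lambda_N(s,v)$ is the maximum number of pairwise arc-disjoint $\tau$-respecting $(s,v)$-paths. An $s$-arborescence is an acyclic subgraph $F=(V'\cup\{s\},A')$ in which every vertex of $V'$ has in-degree exactly $1$; it is spanning if $V'=V$, and $\tau$-respecting if for every $v\in V'$ the unique $(s,v)$-path in $F$ is $\tau$-respecting. *)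

(* Defs.v *)
From mathcomp Require Import all_boot.
Set Implicit Arguments. Unset Strict Implicit. Unset Printing Implicit Defensive.

(* A temporal network: vertex type T (a finType containing the root s),
   arc type Arc (a finType, so parallel arcs are allowed), tail/head maps
   src/dst : Arc -> T, and time labels tau : Arc -> nat.  V = T \ {s}. *)

Section TemporalNetwork.
Variables (T Arc : finType) (src dst : Arc -> T) (tau : Arc -> nat).

Fixpoint is_walk (x y : T) (p : seq Arc) : bool :=
  match p with
  | [::] => x == y
  | a :: p' => (src a == x) && is_walk (dst a) y p'
  end.

Definition is_dpath (x y : T) (p : seq Arc) : bool :=
  is_walk x y p && uniq (x :: map dst p).

Definition tau_respecting (p : seq Arc) : bool := sorted leq (map tau p).

Definition tau_path (x y : T) (p : seq Arc) : bool :=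
  is_dpath x y p && tau_respecting p.

Definition lambda_ge (s v : T) (k : nat) : Prop :=
  exists P : 'I_k -> seq Arc,
    (forall i, tau_path s v (P i)) /\
    (forall i j, i != j -> forall a, a \in P i -> a \notin P j).

Definition has_cycle (F : {set Arc}) : Prop :=
  exists (x : T) (p : seq Arc),
    p != [::] /\ is_walk x x p /\ all (fun a => a \in F) p.

Definition spanning_arborescence (s : T) (F : {set Arc}) : Prop :=
  ~ has_cycle F /\
  (forall v, v != s -> #|[set a in F | dst a == v]| = 1).

(* tau-respecting: for every v in V the unique (s,v)-path of F is
   tau-respecting (stated as: every (s,v)-path using arcs of F is). *)
Definition tau_resp_arborescence (s : T) (F : {set Arc}) : Prop :=
  spanning_arborescence s F /\
  (forall v, v != s -> forall p, is_dpath s v p -> all (fun a => a \in F) p ->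
     tau_respecting p).

End TemporalNetwork.

(* Main.v *)
From Stdlib Require Import Classical ClassicalEpsilon.
Require Import Defs.
From mathcomp Require Import all_boot.
From mathcomp Require Import zify.
Set Implicit Arguments. Unset Strict Implicit. Unset Printing Implicit Defensive.

Lemma ex_min_nat (P : nat -> Prop) :
  (exists n, P n) -> exists m, P m /\ forall j, P j -> m <= j.
Proof.
move=> [n Pn]; elim: n {-2}n (leqnn n) Pn => [|n IH] m lemn Pm.
- exists m; split => // j _; by move: lemn; rewrite leqn0 => /eqP->.
- case: (classic (exists j, P j /\ j < m)) => [[j [Pj ltjm]]|nj].
  + apply: (IH j) => //; by rewrite -ltnS (leq_trans ltjm lemn).
  + exists m; split => // j Pj; rewrite leqNgt; apply/negP => ltjm; apply nj; by exists j.
Qed.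

Lemma sorted_rcons_leq (l : seq nat) t :
  sorted leq (rcons l t) -> sorted leq l && (last 0 l <= t).
Proof. case: l => [|x l] //=. by rewrite rcons_path. Qed.

Section Pf.
Variables (T Arc : finType) (src dst : Arc -> T) (tau : Arc -> nat) (s : T).
Hypothesis Hin : forall a, dst a != s.

Lemma is_walk_rcons x y q a :
  is_walk src dst x y (rcons q a) = is_walk src dst x (src a) q && (dst a == y).
Proof.
elim: q x => [|b q IH] x /=; first by rewrite eq_sym.
by rewrite IH andbA.
Qed.

Definition NN := #|T|.

Lemma NN_gt0 : 0 < NN.
Proof. by apply/card_gt0P; exists s. Qed.

Lemma size_dpath x y p : is_dpath src dst x y p -> size p < NN.
Proof.
case/andP=> _ u.
have := uniq_leq_size u (s2 := enum T) (fun z _ => mem_enum T z).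
by rewrite /= size_map -cardE.
Qed.

Section Reach.
Variable B : {set Arc}.

Definition okp v p := tau_path src dst tau s v p && all (fun a => a \in B) p.
Definition ltime p := last 0 (map tau p).
Definition w p := ltime p * NN + size p.
Definition Pk v k := exists p, okp v p /\ w p = k.
Definition key v := epsilon (inhabits 0) (fun k => Pk v k /\ forall j, Pk v j -> k <= j).
Definition E u := key u %/ NN.

Lemma key_spec v : (exists p, okp v p) -> Pk v (key v) /\ forall j, Pk v j -> key v <= j.
Proof.
move=> [p hp]; rewrite /key; apply: (@epsilon_spec nat (inhabits 0) (fun k => Pk v k /\ forall j, Pk v j -> k <= j)); apply: ex_min_nat.
by exists (w p), p.
Qed.

Definition good b := [&& b \in B, key (src b) < key (dst b), E (src b) <= tau b & tau b == E (dst b)].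

Lemma local v : v != s -> (exists p, okp v p) -> exists a, good a && (dst a == v).
Proof.
move=> nvs hp; have [[p [okpp wp]] minv] := key_spec hp.
case/lastP: p okpp wp => [|q a].
  by case/andP => /andP[/andP[/= /eqP svs _] _] _; rewrite svs eqxx in nvs.
move=> okpp wp.
have szp := size_dpath (proj1 (andP (proj1 (andP okpp)))).
case/andP: okpp => /andP[/andP[Hw Hu] Hs] Hall.
move: Hw; rewrite is_walk_rcons => /andP[Hwq dav].
move: Hu; rewrite map_rcons -rcons_cons rcons_uniq => /andP[_ Huq].
move: Hs; rewrite /tau_respecting map_rcons => /sorted_rcons_leq /andP[Hsq lq].
move: Hall; rewrite all_rcons => /andP[aB Hallq].
have okq : okp (src a) q by rewrite /okp /tau_path /is_dpath /tau_respecting Hwq Huq Hsq Hallq.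
have szq := size_dpath (proj1 (andP (proj1 (andP okq)))).
have [_ minu] := key_spec (ex_intro _ q okq).
have ku : key (src a) <= w q by apply: minu; exists q.
have wpe : w (rcons q a) = tau a * NN + (size q).+1.
  by rewrite /w /ltime map_rcons last_rcons size_rcons.
have lq' : ltime q * NN <= tau a * NN by rewrite leq_mul2r lq orbT.
move/eqP: (dav) => dav'; subst v.
exists a; rewrite /good aB dav /= andbT.
have Ev : E (dst a) = tau a.
  rewrite /E -wp wpe divnMDl ?NN_gt0 // divn_small ?addn0 //.
  by rewrite size_rcons in szp.
rewrite Ev eqxx andbT.
apply/andP; split.
  rewrite -wp wpe; apply: (leq_ltn_trans ku); rewrite /w; lia.
rewrite /E; apply: (leq_trans (leq_div2r NN ku)).
by rewrite /w divnMDl ?NN_gt0 // divn_small // addn0.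
Qed.

Definition Fset := [set a | (dst a != s) && ([pick b | good b && (dst b == dst a)] == Some a)].

Lemma Fgood a : a \in Fset -> good a.
Proof. rewrite inE => /andP[_]; case: pickP => // b /andP[gb _] /eqP[<-] //. Qed.

Lemma walk_key x y p : is_walk src dst x y p -> all (fun a => a \in Fset) p ->
  key x + size p <= key y.
Proof.
elim: p x => [|a p IH] x /=; first by move=> /eqP-> _; rewrite addn0.
case/andP=> /eqP sa hw /andP[aF hall].
have := IH _ hw hall; have /and4P[_ k _ _] := Fgood aF; rewrite sa in k. lia.
Qed.

Lemma walk_tau x y p : is_walk src dst x y p -> all (fun a => a \in Fset) p ->
  path leq (E x) (map tau p).
Proof.
elim: p x => [|a p IH] x //= /andP[/eqP sa hw] /andP[aF hall].
have /and4P[_ _ h1 /eqP h2] := Fgood aF. rewrite -sa h1 /= h2; exact: IH.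
Qed.

Lemma reach_arb : (forall v, v != s -> exists p, okp v p) ->
  exists F : {set Arc}, F \subset B /\ tau_resp_arborescence src dst tau s F.
Proof.
move=> Hr; exists Fset; split; [|split; [split|]].
- by apply/subsetP => a /Fgood /and4P[].
- move=> [x [p [pn [hw hall]]]]; have := walk_key hw hall.
  have : 0 < size p by rewrite lt0n size_eq0.
  lia.
- move=> v nvs; have [a /andP[ga dav]] := local nvs (Hr v nvs).
  case hp: [pick b | good b && (dst b == v)] => [b|]; last first.
    by move: hp; case: pickP => // /(_ a); rewrite ga dav.
  have /andP[gb /eqP db] : good b && (dst b == v).
    by move: hp; case: pickP => // b' hb' [<-].
  suff -> : [set a0 in Fset | dst a0 == v] = [set b] by rewrite cards1.
  apply/setP => c; rewrite !inE; apply/idP/idP.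
    move/andP=> [/andP[_ pc] /eqP dc]; move: pc; rewrite dc hp.
    by move/eqP=> [->].
  by move/eqP->; rewrite db hp nvs !eqxx.
- move=> v nvs p /andP[hw _] hall; move: (walk_tau hw hall).
  rewrite /tau_respecting; case: (map tau p) => // t l /= /andP[_ ->] //.
Qed.

End Reach.
End Pf.

Theorem mainTheorem9 (T Arc : finType) (src dst : Arc -> T) (tau : Arc -> nat)
  (s : T) :
  (forall a : Arc, dst a != s) ->
  (forall v : T, v != s -> lambda_ge src dst tau s v #|T|) ->
  exists F1 F2 : {set Arc},
    tau_resp_arborescence src dst tau s F1 /\
    tau_resp_arborescence src dst tau s F2 /\
    F1 :&: F2 = set0.
Proof.
move=> Hin Hl.
have N0 : 0 < #|T| by apply/card_gt0P; exists s.
pose i0 : 'I_#|T| := Ordinal N0.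
have hr1 : forall v, v != s -> exists p, okp src dst tau s setT v p.
  move=> v nvs; have [P [HP _]] := Hl v nvs; exists (P i0).
  by rewrite /okp HP /=; apply/allP => a _; rewrite inE.
have [F1 [sub1 arb1]] := reach_arb hr1.
have [[_ indeg1] _] := arb1.
have cardF1 : #|F1| < #|T|.
  have inj : {in F1 &, injective dst}.
    move=> a b aF bF eab; have := indeg1 (dst a) (Hin a); move/eqP/cards1P => [x hx].
    have : a \in [set c in F1 | dst c == dst a] by rewrite inE aF eqxx.
    have : b \in [set c in F1 | dst c == dst a] by rewrite inE bF eab eqxx.
    by rewrite hx !inE => /eqP-> /eqP->.
  rewrite -(card_in_imset inj); apply: (@leq_ltn_trans #|[set~ s]|).
    apply: subset_leq_card; apply/subsetP => _ /imsetP[a _ ->]; by rewrite !inE Hin.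
  by rewrite cardsC1 ltn_predL.
have hr2 : forall v, v != s -> exists p, okp src dst tau s (~: F1) v p.
  move=> v nvs; have [P [HP Hdisj]] := Hl v nvs.
  case: (classic (exists i, all (fun a => a \in ~: F1) (P i))) => [[i hi]|hno].
    by exists (P i); rewrite /okp HP hi.
  exfalso.
  have hit : forall i, exists a, (a \in P i) && (a \in F1).
    move=> i; apply: NNPP => hn; apply: hno; exists i; apply/allP => a ha.
    rewrite inE; apply/negP => aF; apply: hn; exists a; by rewrite ha aF.
  have [a0 _] := hit i0.
  pose g i := odflt a0 [pick a | (a \in P i) && (a \in F1)].
  have gP i : (g i \in P i) && (g i \in F1).
    rewrite /g; case: pickP => //= hn; have [a ha] := hit i.
    by move: (hn a); rewrite ha.
  have ginj : injective g.
    move=> i j eij; apply/eqP; apply: contraT => nij.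
    have /andP[gi _] := gP i; have /andP[gj _] := gP j.
    by move: (Hdisj i j nij (g i) gi); rewrite eij gj.
  have : #|[set: 'I_#|T|]| <= #|F1|.
    rewrite -(card_imset _ ginj); apply: subset_leq_card.
    apply/subsetP => _ /imsetP[i _ ->]; by have /andP[_] := gP i.
  by rewrite cardsT card_ord leqNgt cardF1.
have [F2 [sub2 arb2]] := reach_arb hr2.
exists F1, F2; split; first exact: arb1; split; first exact: arb2.
apply/setP => a; rewrite !inE; case aF2: (a \in F2); last by rewrite andbF.
by have := subsetP sub2 a aF2; rewrite inE => /negbTE ->.
Qed.
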